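(* Let $\bar a,\bar b$ realize the same complete type over $\emptyset$, suppose $tp(\bar a/\bar b)$ is not semi-isolated, and suppose $\varphi(\bar x,\bar a)\in tp(\bar b/\bar a)$ is a formula witnessing that $tp(\bar b/\bar a)$ is semi-isolated (i.e. every realization of $\varphi(\bar x,\bar a)$ realizes $tp(\bar b)$). Let $\bar c$ be any tuple with $tp(\bar c\bar b)=tp(\bar b\bar a)$. Then the formula $\varphi(\bar c,\bar x)\wedge\varphi(\bar x,\bar a)$ forks over $\emptyset$; in particular $tp(\bar b/\bar c\bar a)$ forks over $\emptyset$.
   Context: Work in the monster model of a complete first-order theory $T$. A (possibly partial) type $p$ forks over a set $A$ if there are an $L$-formula $\psi(\bar x,\bar y)$ and tuples $\bar d_i$ ($i<\omega$) such that $p\vdash\psi(\bar x,\bar d_0)$, $tp(\bar d_i/A)=tp(\bar d_0/A)$ for all $i$, and $\{\psi(\bar x,\bar d_i)\mid i<\omega\}$ is $k$-inconsistent for some $k<\omega$; a formula forks if the partial type consisting of it forks. $tp(\bar b/\bar a)$ is semi-isolated if there is a formula $\varphi(\bar x,\bar a)\in tp(\bar b/\bar a)$ every realization of which realizes $tp(\bar b)$. *)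

(* Defs.v *)
From Stdlib Require List.
From mathcomp Require Import all_boot.
Set Implicit Arguments.
Unset Strict Implicit.
Unset Printing Implicit Defensive.

Record signature := Signature {
  fsym : Type; farity : fsym -> nat;
  rsym : Type; rarity : rsym -> nat }.

Section Syntax.
Variable L : signature.

Inductive term : Type :=
  | tvar : nat -> term
  | tapp : forall f : fsym L, ('I_(farity f) -> term) -> term.

Inductive form : Type :=
  | fFalse : form
  | fEq : term -> term -> form
  | fRel : forall r : rsym L, ('I_(rarity r) -> term) -> form
  | fNeg : form -> form
  | fAnd : form -> form -> form
  | fEx : form -> form.

Fixpoint tbnd (n : nat) (t : term) : Prop :=
  match t with
  | tvar k => k < n
  | tapp f a => forall i, tbnd n (a i)
  end.

Fixpoint fbnd (n : nat) (phi : form) : Prop :=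
  match phi with
  | fFalse => True
  | fEq t1 t2 => tbnd n t1 /\ tbnd n t2
  | fRel r a => forall i, tbnd n (a i)
  | fNeg p => fbnd n p
  | fAnd p q => fbnd n p /\ fbnd n q
  | fEx p => fbnd n.+1 p
  end.
End Syntax.

Record structure (L : signature) := Structure {
  carrier :> Type;
  inhabitant : carrier;
  interpF : forall f : fsym L, ('I_(farity f) -> carrier) -> carrier;
  interpR : forall r : rsym L, ('I_(rarity r) -> carrier) -> Prop }.

Section Semantics.
Variables (L : signature) (M : structure L).

Fixpoint teval (v : nat -> M) (t : term L) : M :=
  match t with
  | tvar k => v k
  | tapp f a => @interpF L M f (fun i => teval v (a i))
  end.

Definition scons (m : M) (v : nat -> M) : nat -> M :=
  fun k => match k with 0 => m | k'.+1 => v k' end.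

Fixpoint sat (v : nat -> M) (phi : form L) : Prop :=
  match phi with
  | fFalse => False
  | fEq t1 t2 => teval v t1 = teval v t2
  | fRel r a => @interpR L M r (fun i => teval v (a i))
  | fNeg p => ~ sat v p
  | fAnd p q => sat v p /\ sat v q
  | fEx p => exists m : M, sat (scons m v) p
  end.

Definition tval (n : nat) (x : 'I_n -> M) : nat -> M :=
  fun k => match insub k with Some i => x i | None => inhabitant M end.

Definition tcat (n m : nat) (x : 'I_n -> M) (y : 'I_m -> M) : 'I_(n + m) -> M :=
  fun i => match split i with inl j => x j | inr j => y j end.

Definition holds (n : nat) (phi : form L) (x : 'I_n -> M) : Prop :=
  sat (tval x) phi.

Definition same_type (n : nat) (x y : 'I_n -> M) : Prop :=
  forall phi : form L, fbnd n phi -> (holds phi x <-> holds phi y).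

Definition semi_isolating (n m : nat) (phi : form L)
    (b : 'I_n -> M) (a : 'I_m -> M) : Prop :=
  fbnd (n + m) phi /\ holds phi (tcat b a) /\
  forall x : 'I_n -> M, holds phi (tcat x a) -> same_type x b.

Definition semi_isolated (n m : nat) (b : 'I_n -> M) (a : 'I_m -> M) : Prop :=
  exists phi : form L, semi_isolating phi b a.

(** A partial type p(x) in n variables, given by its set of realizations P,
    forks over the empty set. *)
Definition k_inconsistent (n m : nat) (psi : form L) (d : nat -> 'I_m -> M)
    (k : nat) : Prop :=
  forall S : seq nat, uniq S -> size S = k ->
    ~ (exists x : 'I_n -> M, forall i, i \in S -> holds psi (tcat x (d i))).

Definition forks_over_empty (n : nat) (P : ('I_n -> M) -> Prop) : Prop :=
  exists (m : nat) (psi : form L) (d : nat -> 'I_m -> M) (k : nat),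
    fbnd (n + m) psi /\
    (forall x, P x -> holds psi (tcat x (d 0))) /\
    (forall i, same_type (d i) (d 0)) /\
    k_inconsistent n psi d k.

(** Saturation: M is aleph_1-saturated, i.e. every finitely satisfiable set
    of formulas in finitely many variables with parameters from a countable
    set (range of p) is realized in M. *)
Record pform : Type := PForm { pm : nat; pf : form L; pe : 'I_pm -> M }.

Definition aleph1_saturated : Prop :=
  forall (n : nat) (p : nat -> M) (Sigma : pform -> Prop),
    (forall q, Sigma q ->
       fbnd (n + pm q) (pf q) /\ forall i, exists j, @pe q i = p j) ->
    (forall s : list pform, List.Forall Sigma s ->
       exists x : 'I_n -> M,
         List.Forall (fun q => holds (pf q) (tcat x (@pe q))) s) ->
    exists x : 'I_n -> M, forall q, Sigma q -> holds (pf q) (tcat x (@pe q)).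
End Semantics.

(* Main.v *)
Require Import Defs.
From mathcomp Require Import all_boot zify.
From Stdlib Require Import Classical FunctionalExtensionality ClassicalEpsilon.
Set Implicit Arguments.
Unset Strict Implicit.
Unset Printing Implicit Defensive.

Notation dtval := Defs.tval.

Definition vcat {T : Type} (n : nat) (f g : nat -> T) : nat -> T :=
  fun k => if k < n then f k else g (k - n).

Fixpoint tren {L : signature} (s : nat -> nat) (t : term L) : term L :=
  match t with
  | tvar k => tvar L (s k)
  | tapp f a => tapp (fun i => tren s (a i))
  end.

Definition up (s : nat -> nat) : nat -> nat :=
  fun k => match k with 0 => 0 | k'.+1 => (s k').+1 end.

Fixpoint fren {L : signature} (s : nat -> nat) (p : form L) : form L :=
  match p with
  | fFalse => fFalse L
  | fEq t1 t2 => fEq (tren s t1) (tren s t2)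
  | fRel r a => fRel (fun i => tren s (a i))
  | fNeg q => fNeg (fren s q)
  | fAnd q1 q2 => fAnd (fren s q1) (fren s q2)
  | fEx q => fEx (fren (up s) q)
  end.

Lemma teval_bnd {L : signature} {M : structure L} (t : term L) n (v w : nat -> M) :
  tbnd n t -> (forall k, k < n -> v k = w k) -> teval v t = teval w t.
Proof.
elim: t => [k|f a IH] /= hb hvw; first exact: hvw.
congr interpF; apply: functional_extensionality => i; exact: IH.
Qed.

Lemma sat_bnd {L : signature} {M : structure L} (p : form L) n (v w : nat -> M) :
  fbnd n p -> (forall k, k < n -> v k = w k) -> (sat v p <-> sat w p).
Proof.
elim: p n v w => [|t1 t2|r a|q IH|q1 IH1 q2 IH2|q IH] n v w /= hb hvw.
- by [].
- by rewrite (teval_bnd hb.1 hvw) (teval_bnd hb.2 hvw).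
- have -> : (fun i => teval v (a i)) = (fun i => teval w (a i)).
    by apply: functional_extensionality => i; exact: teval_bnd (hb i) hvw.
  by [].
- by rewrite (IH n v w hb hvw).
- by rewrite (IH1 n v w hb.1 hvw) (IH2 n v w hb.2 hvw).
- split=> -[m hm]; exists m.
  + apply/(IH n.+1 (scons m v) (scons m w) hb) => // -[|k] //= hk; exact: hvw.
  + apply/(IH n.+1 (scons m v) (scons m w) hb) => // -[|k] //= hk; exact: hvw.
Qed.

Lemma teval_ren {L : signature} {M : structure L} (t : term L) s (v : nat -> M) :
  teval v (tren s t) = teval (v \o s) t.
Proof.
elim: t => [k|f a IH] //=; congr interpF; apply: functional_extensionality => i; exact: IH.
Qed.

Lemma sat_ren {L : signature} {M : structure L} (p : form L) s (v : nat -> M) :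
  sat v (fren s p) <-> sat (v \o s) p.
Proof.
elim: p s v => [|t1 t2|r a|q IH|q1 IH1 q2 IH2|q IH] s v /=.
- by [].
- by rewrite !teval_ren.
- have -> : (fun i => teval v (tren s (a i))) = (fun i => teval (v \o s) (a i)).
    by apply: functional_extensionality => i; exact: teval_ren.
  by [].
- by rewrite IH.
- by rewrite IH1 IH2.
- have E : forall m, scons m v \o up s = scons m (v \o s).
    by move=> m; apply: functional_extensionality => -[|k].
  by split=> -[m hm]; exists m; move: hm; rewrite IH E.
Qed.

Lemma tbnd_ren {L : signature} (t : term L) K N s :
  tbnd K t -> (forall k, k < K -> s k < N) -> tbnd N (tren s t).
Proof. elim: t => [k|f a IH] /= hb hs; [exact: hs | move=> i; exact: IH]. Qed.

Lemma fbnd_ren {L : signature} (p : form L) K N s :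
  fbnd K p -> (forall k, k < K -> s k < N) -> fbnd N (fren s p).
Proof.
elim: p K N s => [|t1 t2|r a|q IH|q1 IH1 q2 IH2|q IH] K N s /= hb hs.
- by [].
- split; exact: tbnd_ren (hb.1) hs || exact: tbnd_ren (hb.2) hs.
- move=> i; exact: tbnd_ren (hb i) hs.
- exact: IH hb hs.
- split; [exact: IH1 hb.1 hs | exact: IH2 hb.2 hs].
- apply: IH hb _ => -[|k] //= hk; exact: hs.
Qed.

Lemma tbnd_mono {L : signature} (t : term L) n n' : n <= n' -> tbnd n t -> tbnd n' t.
Proof. elim: t => [k|f a IH] /= hn hb; [lia | move=> i; exact: IH]. Qed.

Lemma fbnd_mono {L : signature} (p : form L) n n' : n <= n' -> fbnd n p -> fbnd n' p.
Proof.
elim: p n n' => [|t1 t2|r a|q IH|q1 IH1 q2 IH2|q IH] n n' /= hn hb.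
- by [].
- split; [exact: tbnd_mono hn hb.1 | exact: tbnd_mono hn hb.2].
- move=> i; exact: tbnd_mono hn (hb i).
- exact: IH hn hb.
- split; [exact: IH1 hn hb.1 | exact: IH2 hn hb.2].
- by apply: IH hb.
Qed.

Lemma tval_lt {L : signature} {M : structure L} n (x : 'I_n -> M) k (hk : k < n) :
  dtval x k = x (Ordinal hk).
Proof. by rewrite /Defs.tval insubT. Qed.

Lemma tval_ge {L : signature} {M : structure L} n (x : 'I_n -> M) k :
  n <= k -> dtval x k = inhabitant M.
Proof. move=> hk; rewrite /Defs.tval insubF //; lia. Qed.

Lemma tval_tcat {L : signature} {M : structure L} n m (x : 'I_n -> M) (y : 'I_m -> M) :
  dtval (tcat x y) = vcat n (dtval x) (dtval y).
Proof.
apply: functional_extensionality => k; rewrite /vcat.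
case: (ltnP k (n + m)) => hk.
- rewrite (tval_lt _ hk) /tcat; case: splitP => j /= hj.
  + have hj' : k < n by rewrite hj.
    rewrite hj' (tval_lt _ hj'); congr x; exact: val_inj.
  + have hj' : ~~ (k < n) by lia.
    have hj2 : k - n < m by lia.
    rewrite (negbTE hj') (tval_lt _ hj2); congr y; apply: val_inj => /=; lia.
- rewrite tval_ge //; case: ifP => h; [lia|]; rewrite tval_ge //; lia.
Qed.
Set Implicit Arguments.
Unset Strict Implicit.
Unset Printing Implicit Defensive.

Lemma holds_ren {L : signature} {M : structure L} N K (p : form L) s
  (X : 'I_N -> M) (Y : 'I_K -> M) :
  fbnd K p -> (forall k, k < K -> dtval Y k = dtval X (s k)) ->
  (holds (fren s p) X <-> holds p Y).
Proof.
move=> hb hY; rewrite /holds sat_ren; apply: sat_bnd hb _ => k hk /=; by rewrite hY.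
Qed.

Lemma same_type_ren {L : signature} {M : structure L} N K s
  (X Y : 'I_N -> M) (V W : 'I_K -> M) :
  same_type X Y -> (forall k, k < K -> s k < N) ->
  (forall k, k < K -> dtval V k = dtval X (s k)) ->
  (forall k, k < K -> dtval W k = dtval Y (s k)) -> same_type V W.
Proof.
move=> hXY hs hV hW p hp.
rewrite -(holds_ren hp hV) -(holds_ren hp hW); apply: hXY; exact: fbnd_ren hp hs.
Qed.

Lemma same_type_refl {L : signature} {M : structure L} n (x : 'I_n -> M) : same_type x x.
Proof. by []. Qed.
Lemma same_type_sym {L : signature} {M : structure L} n (x y : 'I_n -> M) :
  same_type x y -> same_type y x.
Proof. move=> h p hp; symmetry; exact: h. Qed.
Lemma same_type_trans {L : signature} {M : structure L} n (x y z : 'I_n -> M) :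
  same_type x y -> same_type y z -> same_type x z.
Proof. move=> h1 h2 p hp; rewrite (h1 p hp); exact: h2. Qed.

Definition exn {L : signature} (n : nat) (p : form L) : form L := iter n (@fEx L) p.

Lemma fbnd_exn {L : signature} n m (p : form L) : fbnd (n + m) p -> fbnd m (exn n p).
Proof.
elim: n m => [|n IH] m hb //=; apply: IH; by rewrite addnS -addSn.
Qed.

Lemma sat_exn {L : signature} {M : structure L} n (p : form L) (v : nat -> M) :
  sat v (exn n p) <-> exists f, sat (vcat n f v) p.
Proof.
elim: n v => [|n IH] v /=.
- split; first by move=> h; exists v; rewrite /vcat;
    have -> : (fun k => if k < 0 then v k else v (k - 0)) = v
     by apply: functional_extensionality => k; rewrite subn0.
  move=> [f hf]; move: hf; rewrite /vcat.
  by have -> : (fun k => if k < 0 then f k else v (k - 0)) = v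
     by apply: functional_extensionality => k; rewrite subn0.
- split.
  + move=> [m /IH [f hf]]; exists (vcat n f (fun _ => m)).
    have -> : vcat n.+1 (vcat n f (fun=> m)) v = vcat n f (scons m v) => //.
    apply: functional_extensionality => k; rewrite /vcat.
    case: (ltnP k n) => h1; first by rewrite ltnS ltnW.
    case: (ltnP k n.+1) => h2.
    * by have -> : k - n = 0 by lia.
    * have -> : k - n = (k - n.+1).+1 by lia. by [].
  + move=> [f hf]; exists (f n); apply/IH; exists f.
    have <- : vcat n.+1 f v = vcat n f (scons (f n) v) => //.
    apply: functional_extensionality => k; rewrite /vcat.
    case: (ltnP k n) => h1; first by rewrite ltnS ltnW.
    case: (ltnP k n.+1) => h2.
    * have -> : k - n = 0 by lia. have -> : k = n by lia. by [].
    * have -> : k - n = (k - n.+1).+1 by lia. by [].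
Qed.

Lemma holds_exn {L : signature} {M : structure L} n m (p : form L) (X : 'I_m -> M) :
  fbnd (n + m) p ->
  (holds (exn n p) X <-> exists y : 'I_n -> M, holds p (tcat y X)).
Proof.
move=> hb; rewrite /holds sat_exn; split.
- move=> [f hf]; exists (fun i => f (val i)); rewrite tval_tcat.
  apply: (sat_bnd hb _).1 hf => k hk; rewrite /vcat; case: ifP => // h.
  by rewrite (tval_lt _ h).
- move=> [y hy]; exists (dtval y); by rewrite -tval_tcat.
Qed.

Lemma holds_tcat_l {L : signature} {M : structure L} n m (p : form L)
  (x : 'I_n -> M) (y : 'I_m -> M) :
  fbnd n p -> (holds p (tcat x y) <-> holds p x).
Proof.
move=> hb; rewrite /holds tval_tcat; apply: sat_bnd hb _ => k hk; by rewrite /vcat hk.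
Qed.

Lemma forall_transfer {L : signature} {M : structure L} n m (p : form L)
  (v w : 'I_m -> M) :
  same_type v w -> fbnd (n + m) p ->
  (forall x : 'I_n -> M, holds p (tcat x v)) -> forall x : 'I_n -> M, holds p (tcat x w).
Proof.
move=> hvw hb hall x.
have hF : holds (fNeg (exn n (fNeg p))) v.
  rewrite /holds /= -/(holds _ v) holds_exn //.
  by move=> [y hy]; apply: hy; apply: hall.
move/(hvw _ (fbnd_exn (hb : fbnd (n + m) (fNeg p)))) : hF.
rewrite /holds /= -/(holds _ w) holds_exn // => hn.
apply: NNPP => hx; apply: hn; by exists x.
Qed.

Lemma extend {L : signature} {M : structure L} (Msat : aleph1_saturated M) n m
  (b : 'I_n -> M) (a a' : 'I_m -> M) :
  same_type a a' -> exists b' : 'I_n -> M, same_type (tcat b' a') (tcat b a).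
Proof.
move=> haa.
pose Sigma := fun q : pform M => exists th : form L,
  fbnd (n + m) th /\ holds th (tcat b a) /\ q = PForm th a'.
have H1 : forall q, Sigma q -> fbnd (n + pm q) (pf q) /\
      forall i, exists j, @pe _ _ q i = dtval a' j.
  move=> q [th [hb [_ ->]]] /=; split => // i; exists (val i).
  by rewrite (tval_lt _ (ltn_ord i)); congr a'; exact: val_inj.
have H2 : forall s : list (pform M), List.Forall Sigma s ->
    exists x : 'I_n -> M, List.Forall (fun q => holds (pf q) (tcat x (@pe _ _ q))) s.
  move=> s hs.
  have [Th [hTb [hTh hTx]]] : exists Th : form L, fbnd (n + m) Th /\ holds Th (tcat b a) /\
      forall x : 'I_n -> M, holds Th (tcat x a') ->
        List.Forall (fun q => holds (pf q) (tcat x (@pe _ _ q))) s.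
    elim: hs => [|q s0 hq hs0 [Th [hTb [hTh hTx]]]].
    - exists (fNeg (fFalse L)); split => //; split => // x _; exact: List.Forall_nil.
    - move: hq => [th [hb [hth ->]]].
      exists (fAnd th Th); split; first by split.
      split; first by split.
      move=> x [h1 h2]; constructor => //; exact: hTx.
  have hE : holds (exn n Th) a by apply/holds_exn => //; exists b.
  move/(haa _ (fbnd_exn hTb)) : hE => /holds_exn -/(_ hTb) [x hx].
  exists x; exact: hTx.
have [b' hb'] := Msat n (dtval a') Sigma H1 H2.
exists b' => p hp; split => hh.
- apply: NNPP => hn.
  have : Sigma (PForm (fNeg p) a') by exists (fNeg p).
  by move/hb' => /=.
- have : Sigma (PForm p a') by exists p.
  by move/hb'.
Qed.
Set Implicit Arguments.
Unset Strict Implicit.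
Unset Printing Implicit Defensive.

Ltac vc := move=> k hk; rewrite ?tval_tcat /vcat; repeat (case: ifP => ?); try lia;
  try (f_equal; lia).

Lemma pr_pair1 {L : signature} {M : structure L} n m (x x' : 'I_n -> M) (y y' : 'I_m -> M) :
  same_type (tcat x y) (tcat x' y') -> same_type x x'.
Proof. move=> h; apply: (same_type_ren (s := id) h); vc. Qed.

Lemma pr_pair2 {L : signature} {M : structure L} n m (x x' : 'I_n -> M) (y y' : 'I_m -> M) :
  same_type (tcat x y) (tcat x' y') -> same_type y y'.
Proof. move=> h; apply: (same_type_ren (s := fun k => k + n) h); vc. Qed.

Lemma pr_swap {L : signature} {M : structure L} n m (x x' : 'I_n -> M) (y y' : 'I_m -> M) :
  same_type (tcat x y) (tcat x' y') -> same_type (tcat y x) (tcat y' x').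
Proof.
move=> h; apply: (same_type_ren (s := fun k => if k < m then k + n else k - m) h); vc.
Qed.

Lemma pr_12 {L : signature} {M : structure L} n (x x' y y' z z' : 'I_n -> M) :
  same_type (tcat (tcat x y) z) (tcat (tcat x' y') z') -> same_type (tcat x y) (tcat x' y').
Proof. move=> h; apply: (same_type_ren (s := id) h); vc. Qed.

Lemma pr_23 {L : signature} {M : structure L} n (x x' y y' z z' : 'I_n -> M) :
  same_type (tcat (tcat x y) z) (tcat (tcat x' y') z') -> same_type (tcat y z) (tcat y' z').
Proof. move=> h; apply: (same_type_ren (s := fun k => k + n) h); vc. Qed.

Lemma pr_13 {L : signature} {M : structure L} n (x x' y y' z z' : 'I_n -> M) :
  same_type (tcat (tcat x y) z) (tcat (tcat x' y') z') -> same_type (tcat x z) (tcat x' z').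
Proof. move=> h; apply: (same_type_ren (s := fun k => if k < n then k else k + n) h); vc. Qed.

Lemma holds_sym {L : signature} {M : structure L} n (p : form L) (x y : 'I_n -> M) :
  fbnd n p -> same_type x y -> holds p x -> holds p y.
Proof. move=> hb h; exact: (h p hb).1. Qed.

Lemma typeT1 {L : signature} {M : structure L} n (th rho : form L) (v w : 'I_n -> M) :
  fbnd (n + n) th -> fbnd n rho -> same_type v w ->
  (forall x : 'I_n -> M, holds th (tcat x v) -> holds rho x) ->
  forall x : 'I_n -> M, holds th (tcat x w) -> holds rho x.
Proof.
move=> hth hrho hvw h x hx.
have hb : fbnd (n + n) (fNeg (fAnd th (fNeg rho))).
  by split => //; apply: fbnd_mono hrho; lia.
have H : forall x' : 'I_n -> M, holds (fNeg (fAnd th (fNeg rho))) (tcat x' v).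
  move=> x' [h1 h2]; apply: h2; change (holds rho (tcat x' v)); rewrite holds_tcat_l //; exact: h.
have H' := forall_transfer hvw hb H x.
change (~ (holds th (tcat x w) /\ ~ holds rho (tcat x w))) in H'.
apply: NNPP => hn; apply: H'; split => //; by rewrite holds_tcat_l.
Qed.

Lemma typeT {L : signature} {M : structure L} n (th : form L) (u v w : 'I_n -> M) :
  fbnd (n + n) th -> same_type v w ->
  (forall x : 'I_n -> M, holds th (tcat x v) -> same_type x u) ->
  forall x : 'I_n -> M, holds th (tcat x w) -> same_type x u.
Proof.
move=> hth hvw h x hx rho hrho.
case: (classic (holds rho u)) => hu.
- split => // _.
  apply: (typeT1 hth hrho hvw) hx => x' hx'; exact/(h x' hx' rho hrho).
- split => hh //; exfalso.
  have := typeT1 (rho := fNeg rho) hth hrho hvw _ hx; apply => //.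
  move=> x' hx' hr; apply: hu; exact/(h x' hx' rho hrho).
Qed.

Definition SI {L : signature} {M : structure L} n (u v : 'I_n -> M) :=
  exists th : form L, fbnd (n + n) th /\ holds th (tcat u v) /\
    forall x : 'I_n -> M, holds th (tcat x v) -> same_type x u.

Lemma SI_comp {L : signature} {M : structure L} n (u v w : 'I_n -> M) :
  SI u v -> SI v w -> SI u w.
Proof.
move=> [t1 [hb1 [h1 H1]]] [t2 [hb2 [h2 H2]]].
pose s1 := fun k => if k < n then k + n else k - n.
pose s2 := fun k => if k < n then k else k + n.
have hs1 : forall k, k < n + n -> s1 k < n + (n + n) by move=> k hk; rewrite /s1; case: ifP; lia.
have hs2 : forall k, k < n + n -> s2 k < n + (n + n) by move=> k hk; rewrite /s2; case: ifP; lia.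
have hb : fbnd (n + (n + n)) (fAnd (fren s1 t1) (fren s2 t2)).
  by split; [exact: fbnd_ren hb1 hs1 | exact: fbnd_ren hb2 hs2].
have E : forall x y z : 'I_n -> M, holds (fAnd (fren s1 t1) (fren s2 t2)) (tcat y (tcat x z))
   <-> holds t1 (tcat x y) /\ holds t2 (tcat y z).
  move=> x y z; rewrite /holds /= -!/(holds _ _).
  rewrite (holds_ren hb1 (X := tcat y (tcat x z)) (Y := tcat x y)); last first.
    by rewrite /s1; vc.
  rewrite (holds_ren hb2 (X := tcat y (tcat x z)) (Y := tcat y z)) //.
  by rewrite /s2; vc.
exists (exn n (fAnd (fren s1 t1) (fren s2 t2))); split; first exact: fbnd_exn.
split.
- apply/holds_exn => //; exists v; exact/E.
- move=> x /holds_exn -/(_ hb) [y /E [hxy hyw]].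
  have hyv := H2 y hyw.
  exact: (typeT hb1 (same_type_sym hyv) H1) hxy.
Qed.
Set Implicit Arguments.
Unset Strict Implicit.
Unset Printing Implicit Defensive.

Definition lft {T : Type} n (w : 'I_(n + n) -> T) : 'I_n -> T := fun j => w (lshift n j).
Definition rgt {T : Type} n (w : 'I_(n + n) -> T) : 'I_n -> T := fun j => w (rshift n j).

Lemma tcat_lr {L : signature} {M : structure L} n (w : 'I_(n + n) -> M) :
  tcat (lft w) (rgt w) = w.
Proof.
apply: functional_extensionality => i; rewrite /tcat /lft /rgt.
case: splitP => j hj; congr w; apply: val_inj => //=.
Qed.

Lemma witness {L : signature} {M : structure L}
    (Msat : aleph1_saturated M)
    (n : nat) (a b : 'I_n -> M)
    (hab : same_type a b)
    (hnsi : ~ semi_isolated a b)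
    (phi : form L) (hphi : semi_isolating phi b a)
    (c : 'I_n -> M) (hc : same_type (tcat c b) (tcat b a)) :
  exists (d : nat -> 'I_(n + n) -> M) (psi : form L),
    fbnd (n + (n + n)) psi /\
    (forall x y z : 'I_n -> M, holds psi (tcat x (tcat y z)) <->
        holds phi (tcat y x) /\ holds phi (tcat x z)) /\
    d 0 = tcat c a /\ (forall i, same_type (d i) (d 0)) /\ k_inconsistent n psi d 3.
Proof.
have [hbphi [hphiba hiso]] := hphi.
have hba : same_type b a := same_type_sym hab.
have hcb : same_type c b := pr_pair1 hc.
have hca : same_type c a := same_type_trans hcb hba.
have F1 : forall u v : 'I_n -> M, same_type v a -> holds phi (tcat u v) -> same_type u a.
  move=> u v hv; apply: (typeT hbphi (same_type_sym hv)) => x hx.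
  exact: same_type_trans (hiso x hx) hba.
have L1 : forall u v : 'I_n -> M, same_type v a -> holds phi (tcat u v) -> SI u v.
  move=> u v hv huv; exists phi; split => //; split => // x hx.
  apply: same_type_trans (F1 x v hv hx) (same_type_sym (F1 u v hv huv)).
have F2 : forall u v : 'I_n -> M, SI u v -> same_type (tcat u v) (tcat a b) -> False.
  move=> u v [th [hth [huv H]]] hp; apply: hnsi; exists th; split => //; split.
  - exact: (hp th hth).1.
  - move=> x hx; apply: same_type_trans (pr_pair1 hp).
    exact: (typeT hth (pr_pair2 hp) H).
have step : forall u : 'I_n -> M, exists w : 'I_(n + n) -> M,
    same_type u a -> same_type (tcat w u) (tcat (tcat c b) a).
  move=> u; case: (classic (same_type u a)) => hu.
  - have [w hw] := extend Msat (tcat c b) (same_type_sym hu); by exists w.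
  - by exists (fun _ => inhabitant M).
pose stepf := fun u => proj1_sig (constructive_indefinite_description _ (step u)).
have hstep : forall u, same_type u a -> same_type (tcat (stepf u) u) (tcat (tcat c b) a).
  move=> u; exact: (proj2_sig (constructive_indefinite_description _ (step u))).
pose g := fix g i := match i with 0 => a | j.+1 => if j is 0 then c else lft (stepf (g j)) end.
pose h := fun i => if i is 0 then b else rgt (stepf (g i)).
have T : forall i, same_type (tcat (tcat (g i.+1) (h i)) (g i)) (tcat (tcat c b) a)
    /\ same_type (g i) a.
  elim=> [|i [IH1 IH2]]; first by split.
  have hg : same_type (g i.+1) a.
    exact: same_type_trans (pr_pair1 (pr_12 IH1)) hca.
  split => //.
  have -> : tcat (g i.+2) (h i.+1) = stepf (g i.+1) by exact: tcat_lr.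
  exact: hstep.
have hg : forall i, same_type (g i) a by move=> i; exact: (T i).2.
have hh : forall i, same_type (h i) a.
  move=> i; exact: same_type_trans (pr_pair2 (pr_12 (T i).1)) hba.
have Rgh : forall i, holds phi (tcat (g i.+1) (h i)).
  move=> i; apply: (holds_sym hbphi (same_type_sym (pr_12 (T i).1))).
  exact: (holds_sym hbphi (same_type_sym hc)).
have Rhg : forall i, holds phi (tcat (h i) (g i)).
  move=> i; apply: (holds_sym hbphi (same_type_sym (pr_23 (T i).1))) => //.
have Pab : forall i, same_type (tcat (h i) (g i.+1)) (tcat a b).
  move=> i; apply: pr_swap; exact: same_type_trans (pr_12 (T i).1) hc.
have chain : forall dd p, SI (h (p + dd)) (g p).
  elim=> [|dd IH] p; first by rewrite addn0; apply: L1.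
  apply: SI_comp (L1 _ _ (hg _) (Rhg _)) _; rewrite addnS.
  apply: SI_comp (L1 _ _ (hh _) (Rgh _)) _; exact: IH.
pose s1 := fun k => if k < n then k + n else k - n.
pose s2 := fun k => if k < n then k else k + n.
have hs1 : forall k, k < n + n -> s1 k < n + (n + n) by move=> k hk; rewrite /s1; case: ifP; lia.
have hs2 : forall k, k < n + n -> s2 k < n + (n + n) by move=> k hk; rewrite /s2; case: ifP; lia.
pose psi := fAnd (fren s1 phi) (fren s2 phi).
have hb : fbnd (n + (n + n)) psi.
  by split; [exact: fbnd_ren hbphi hs1 | exact: fbnd_ren hbphi hs2].
have E : forall x y z : 'I_n -> M, holds psi (tcat x (tcat y z))
   <-> holds phi (tcat y x) /\ holds phi (tcat x z).
  move=> x y z; rewrite /holds /= -!/(holds _ _).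
  rewrite (holds_ren hbphi (X := tcat x (tcat y z)) (Y := tcat y x)); last first.
    by rewrite /s1; vc.
  rewrite (holds_ren hbphi (X := tcat x (tcat y z)) (Y := tcat x z)) //.
  by rewrite /s2; vc.
pose d := fun i => tcat (g i.+1) (g i).
exists d, psi; split => //; split => //; split => //; split.
  move=> i; rewrite /d /=; exact: pr_13 (T i).1.
have key : forall i l (x : 'I_n -> M), i.+2 <= l ->
    holds psi (tcat x (d i)) -> holds psi (tcat x (d l)) -> False.
  move=> i l x hil /E [hgx _] /E [_ hxg].
  have hx : same_type x a := F1 x (g l) (hg l) hxg.
  have S1 : SI (g i.+1) (g l) := SI_comp (L1 _ _ hx hgx) (L1 _ _ (hg l) hxg).
  have S2 : SI (h l.-1) (g i.+1).
    have := chain (l.-1 - i.+1) i.+1; have -> : i.+1 + (l.-1 - i.+1) = l.-1 by lia.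
    by [].
  apply: (F2 _ _ (SI_comp S2 S1)).
  have := Pab l.-1; have -> : l.-1.+1 = l by lia. by [].
move=> S uS sS [x hx].
case: S uS sS hx => [|s1' [|s2' [|s3' [|]]]] //= uS _ hx.
move: uS; rewrite !inE !negb_or => /and3P [/andP [h12 h13] h23 _].
have m1 : s1' \in [:: s1'; s2'; s3'] by rewrite !inE eqxx.
have m2 : s2' \in [:: s1'; s2'; s3'] by rewrite !inE eqxx orbT.
have m3 : s3' \in [:: s1'; s2'; s3'] by rewrite !inE eqxx !orbT.
have K := fun i l mi ml hil => key i l x hil (hx i mi) (hx l ml).
have := K _ _ m1 m2; have := K _ _ m2 m1; have := K _ _ m1 m3;
have := K _ _ m3 m1; have := K _ _ m2 m3; have := K _ _ m3 m2.
lia.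
Qed.

Theorem mainTheorem6 (L : signature) (M : structure L)
    (Msat : aleph1_saturated M)
    (n : nat) (a b : 'I_n -> M)
    (hab : same_type a b)
    (hnsi : ~ semi_isolated a b)
    (phi : form L) (hphi : semi_isolating phi b a)
    (c : 'I_n -> M) (hc : same_type (tcat c b) (tcat b a)) :
  forks_over_empty
    (fun x : 'I_n -> M => holds phi (tcat c x) /\ holds phi (tcat x a))
  /\ forks_over_empty
    (fun x : 'I_n -> M =>
       same_type (tcat x (tcat c a)) (tcat b (tcat c a))).
Proof.
have [d [psi [hb [E [d0 [hd hk]]]]]] := witness Msat hab hnsi hphi hc.
have [hbphi [hphiba _]] := hphi.
split; exists (n + n), psi, d, 3; split => //; split => //.
- by move=> x hx; rewrite d0; apply/E.
- move=> x hx; rewrite d0; apply: (hx psi hb).2; apply/E; split => //.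
  exact: (hc phi hbphi).2.
Qed.
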